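(* For all nonnegative integers $n,\ell,m$, the number of partitions of $n$ with exactly $\ell$ parts and $2$-measure equal to $m$ equals the number of partitions of $n$ with exactly $\ell$ parts whose Durfee square has side length $m$.
   Context: For a partition $\lambda$ and positive integer $k$, the $k$-measure of $\lambda$ is the length of the longest subsequence of the parts of $\lambda$ (listed in weakly decreasing order) in which the difference between any two consecutive members of the subsequence is at least $k$. The Durfee square of a partition is the largest square $s\times s$ contained in its Young (Ferrers) diagram; its length is $s$, i.e., the largest $s$ such that $\lambda$ has at least $s$ parts of size at least $s$. *)

(* Defs.v *)
From mathcomp Require Import all_boot.
Set Implicit Arguments. Unset Strict Implicit. Unset Printing Implicit Defensive.

Definition is_partition (n : nat) (la : seq nat) : bool :=
  [&& sorted geq la, all (fun x => 0 < x) la & sumn la == n].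

Fixpoint seqs_len (k n : nat) : seq (seq nat) :=
  match k with
  | 0 => [:: [::]]
  | k'.+1 => [seq x :: s | x <- iota 1 n, s <- seqs_len k' n]
  end.

(* Every partition of n has at most n parts, each between 1 and n, so this
   list contains (exactly once) every partition of n. *)
Definition partitions (n : nat) : seq (seq nat) :=
  undup [seq la <- flatten [seq seqs_len k n | k <- iota 0 n.+1] | is_partition n la].

Fixpoint bitseqs (k : nat) : seq bitseq :=
  match k with
  | 0 => [:: [::]]
  | k'.+1 => [seq b :: m | b <- [:: false; true], m <- bitseqs k']
  end.

Definition k_measure (k : nat) (la : seq nat) : nat :=
  \max_(m <- bitseqs (size la) | sorted (fun a b => b + k <= a) (mask m la))
     size (mask m la).

Definition durfee (la : seq nat) : nat :=
  \max_(0 <= s < (size la).+1 | s <= count (fun x => s <= x) la) s.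

(* Main.v *)
Require Import Defs.
From mathcomp Require Import all_boot zify.
Set Implicit Arguments. Unset Strict Implicit. Unset Printing Implicit Defensive.

Lemma mem_seqs_len k n s :
  (s \in seqs_len k n) = (size s == k) && all (fun x => (0 < x) && (x <= n)) s.
Proof.
elim: k s => [|k IH] [|x s] /=; rewrite ?inE //.
- by apply/allpairsP => -[p []].
- apply/allpairsP/idP => [[[y t]] /= [yI tI [-> ->]]|/andP[sz /andP[/andP[x0 xn] al]]].
    by move: yI tI; rewrite mem_iota IH => yI /andP[/eqP -> ->]; rewrite eqxx /=; lia.
  exists (x, s); split => //=; first by rewrite mem_iota; lia.
  by rewrite IH al andbT -eqSS.
Qed.

Lemma sumn_ge_size s : all (fun x => 0 < x) s -> size s <= sumn s.
Proof. elim: s => //= x s IH /andP[x0 /IH]; lia. Qed.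

Lemma le_sumn s x : x \in s -> x <= sumn s.
Proof. elim: s => //= y s IH; rewrite inE => /orP[/eqP->|/IH]; lia. Qed.

Lemma mem_partitions n la : (la \in partitions n) = is_partition n la.
Proof.
rewrite /partitions mem_undup mem_filter andb_idr // => /and3P[_ pos /eqP sn].
apply/flatten_mapP; exists (size la).
  rewrite mem_iota; have := sumn_ge_size pos; by rewrite sn add0n ltnS.
rewrite mem_seqs_len eqxx /=; apply/allP => x xi.
by rewrite (allP pos x xi) /= -sn le_sumn.
Qed.

Lemma uniq_partitions n : uniq (partitions n).
Proof. exact: undup_uniq. Qed.

Lemma count_bij (T U : eqType) (s : seq T) (t : seq U) (P : pred T) (Q : pred U)
  (f : T -> U) (g : U -> T) :
  uniq s -> uniq t ->
  (forall x, x \in s -> P x -> (f x \in t) && Q (f x)) ->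
  (forall y, y \in t -> Q y -> (g y \in s) && P (g y)) ->
  (forall x, x \in s -> P x -> g (f x) = x) ->
  (forall y, y \in t -> Q y -> f (g y) = y) ->
  count P s = count Q t.
Proof.
move=> us ut fST gST gf fg; rewrite -!size_filter; apply/eqP; rewrite eqn_leq.
apply/andP; split.
- rewrite -(size_map f); apply: uniq_leq_size.
    rewrite map_inj_in_uniq ?filter_uniq // => x y.
    rewrite !mem_filter => /andP[Px xs] /andP[Py ys] e.
    by rewrite -(gf x) // e gf.
  move=> z /mapP[x]; rewrite mem_filter => /andP[Px xs] ->.
  by rewrite mem_filter andbC; apply: fST.
- rewrite -(size_map g); apply: uniq_leq_size.
    rewrite map_inj_in_uniq ?filter_uniq // => x y.
    rewrite !mem_filter => /andP[Px xs] /andP[Py ys] e.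
    by rewrite -(fg x) // e fg.
  move=> z /mapP[x]; rewrite mem_filter => /andP[Px xs] ->.
  by rewrite mem_filter andbC; apply: gST.
Qed.

Lemma count_perm_map (T : eqType) (s : seq T) (f : T -> T) (Q : pred T) :
  uniq s -> {in s, forall x, f x \in s} -> {in s &, injective f} ->
  count Q s = count (fun x => Q (f x)) s.
Proof.
move=> us fs inj.
have um : uniq (map f s) by rewrite map_inj_in_uniq.
have sub : {subset map f s <= s} by move=> y /mapP[x xs ->]; apply: fs.
have [_ eqi] := uniq_min_size um sub (eq_leq (esym (size_map f s))).
rewrite -(count_map f Q); apply/esym; move: Q; apply/permP.
by apply: uniq_perm.
Qed.

Lemma count_sum_keys (T K : eqType) (key : T -> K) (P : pred T) (s : seq T) (ks : seq K) :
  uniq ks ->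
  \sum_(k <- ks) count (fun x => P x && (key x == k)) s =
  count (fun x => P x && (key x \in ks)) s.
Proof.
elim: ks => [|k ks IH] /=.
  by rewrite big_nil -(count_pred0 s) => _; apply: eq_count => x; rewrite in_nil andbF.
move=> /andP[kn uk]; rewrite big_cons IH // -count_predUI.
rewrite [X in _ + X](_ : _ = 0); last first.
  rewrite -(count_pred0 s); apply: eq_count => x /=.
  by case: (P x); case: eqP => //= ->; rewrite (negbTE kn).
by rewrite addn0; apply: eq_count => x /=; rewrite inE; case: (P x).
Qed.

Lemma count_fiber_eq (T K : eqType) (key : T -> K) (P Q : pred T) (s : seq T) :
  (forall k, count (fun x => P x && (key x == k)) s = count (fun x => Q x && (key x == k)) s) ->
  count P s = count Q s.
Proof.
move=> H; set ks := undup (map key s).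
have e R : count R s = count (fun x => R x && (key x \in ks)) s.
  apply: eq_in_count => x xs; rewrite mem_undup map_f ?andbT //.
rewrite (e P) (e Q) -!count_sum_keys ?undup_uniq //.
by apply: eq_bigr => k _; apply: H.
Qed.

Definition R2 := (fun a b : nat => b + 2 <= a).

Lemma R2_trans : transitive R2.
Proof. rewrite /R2 => a b c; lia. Qed.

Lemma mem_bitseqs k m : (m \in bitseqs k) = (size m == k).
Proof.
elim: k m => [|k IH] [|x m] /=; rewrite ?inE //.
  rewrite !mem_cat in_nil orbF; apply/negbTE/norP; split; by apply/mapP => -[].
have inj (c : bool) : injective (cons c) by move=> ? ? [].
rewrite !mem_cat in_nil orbF eqSS -IH.
have nf c c' s : c != c' -> (c :: m \in [seq c' :: m0 | m0 <- s]) = false.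
  by move=> ne; apply/negbTE/mapP => -[y _ [e _]]; rewrite e eqxx in ne.
by case: x; rewrite (mem_map (inj _)) nf ?orbF.
Qed.

Lemma km_ub la S : subseq S la -> sorted R2 S -> size S <= k_measure 2 la.
Proof.
move=> /subseqP[m sz ->] so.
by apply: (leq_bigmax_seq m) => //; rewrite mem_bitseqs sz.
Qed.

Lemma bigmax_att0 (I : eqType) (r : seq I) (P : pred I) (F : I -> nat) i0 :
  i0 \in r -> P i0 -> exists2 i, i \in r & P i && (F i == \max_(j <- r | P j) F j).
Proof.
elim: r i0 => // h t IH i0; rewrite inE big_cons => /orP[/eqP<-|i0t] Pi.
- rewrite Pi; have [ht|] := boolP (has (fun j => P j) t).
    have [j jt Pj] := hasP ht; have [i it /andP[Pi2 /eqP e]] := IH j jt Pj.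
    case: (leqP (F i0) (F i)) => c.
      by exists i; [rewrite inE it orbT | rewrite Pi2 -e (maxn_idPr c) eqxx].
    by exists i0; rewrite ?inE ?eqxx // Pi -e (maxn_idPl (ltnW c)) eqxx.
  move=> nh; exists i0; rewrite ?inE ?eqxx // Pi big_hasC //.
  by rewrite maxn0 eqxx.
- have [i it' /andP[Pi2 /eqP e]] := IH _ i0t Pi.
  case: ifP => Ph; last by exists i; rewrite ?inE ?it' ?orbT // Pi2 -e eqxx.
  case: (leqP (F h) (F i)) => c.
    by exists i; rewrite ?inE ?it' ?orbT // Pi2 -e (maxn_idPr c) eqxx.
  by exists h; rewrite ?inE ?eqxx // Ph -e (maxn_idPl (ltnW c)) eqxx.
Qed.

Lemma km_att la : exists2 S, subseq S la & sorted R2 S && (size S == k_measure 2 la).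
Proof.
have i0 : nseq (size la) false \in bitseqs (size la) by rewrite mem_bitseqs size_nseq.
have p0 : sorted R2 (mask (nseq (size la) false) la) by rewrite mask_false.
have [m mI /andP[so /eqP e]] := @bigmax_att0 _ _ (fun m => sorted R2 (mask m la)) (fun m => size (mask m la)) _ i0 p0.
exists (mask m la); first by apply/subseqP; exists m => //; move: mI; rewrite mem_bitseqs => /eqP.
by rewrite so /= e.
Qed.

Lemma km_map f la : (forall a b, R2 (f a) (f b) = R2 a b) ->
  k_measure 2 (map f la) = k_measure 2 la.
Proof.
move=> hf; rewrite /k_measure size_map.
apply: eq_big => m.
  by rewrite -map_mask sorted_map; apply: eq_sorted => a b /=; apply: hf.
by rewrite -map_mask size_map.
Qed.

Lemma km_succ la : k_measure 2 (map succn la) = k_measure 2 la.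
Proof. by apply: km_map => a b; rewrite /R2; lia. Qed.

Lemma small_sorted S : all (fun x => 0 < x <= 2) S -> sorted R2 S -> size S <= 1.
Proof. case: S => [|x [|y S]] //= /and3P[/andP[x0 x2] /andP[y0 y2] _] /andP[r _]; move: r; rewrite /R2; lia. Qed.

Lemma km_plus2 rho a b : 0 < a -> all (fun x => 0 < x) rho ->
  k_measure 2 (map (addn 2) rho ++ nseq b 2 ++ nseq a 1) = (k_measure 2 rho).+1.
Proof.
move=> a0 pos; apply/eqP; rewrite eqn_leq; apply/andP; split.
- apply/bigmax_leqP_seq => m; rewrite mem_bitseqs => /eqP sz so.
  have [m1 [m2 [em s1]]] : exists m1 m2, m = m1 ++ m2 /\ size m1 = size (map (addn 2) rho).
    exists (take (size (map (addn 2) rho)) m), (drop (size (map (addn 2) rho)) m).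
    split; first by rewrite cat_take_drop.
    by rewrite size_take; move: sz; rewrite size_cat; case: ltnP => //; lia.
  move: so; rewrite em mask_cat //.
  rewrite sorted_pairwise; last exact: R2_trans.
  rewrite pairwise_cat => /and3P[_ p1 p2]; rewrite size_cat.
  have h1 : size (mask m1 (map (addn 2) rho)) <= k_measure 2 rho.
    rewrite -map_mask size_map; apply: km_ub; first exact: mask_subseq.
    move: p1; rewrite -map_mask -sorted_pairwise; last exact: R2_trans.
    by rewrite sorted_map (@eq_sorted _ _ R2) // => x y /=; rewrite /R2; lia.
  have h2 : size (mask m2 (nseq b 2 ++ nseq a 1)) <= 1.
    apply: small_sorted; last by rewrite sorted_pairwise //; exact: R2_trans.
    apply/allP => x /mem_mask; rewrite mem_cat => /orP[] /nseqP [-> _] //.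
  lia.
- have [S sS /andP[so /eqP e]] := km_att rho.
  rewrite -e.
  have -> : (size S).+1 = size (map (addn 2) S ++ [:: 1]) by rewrite size_cat size_map addn1.
  apply: km_ub.
    apply: cat_subseq; first exact: map_subseq.
    by rewrite sub1seq mem_cat; apply/orP; right; apply/nseqP; split.
  rewrite sorted_pairwise; last exact: R2_trans.
  rewrite pairwise_cat -sorted_pairwise; last exact: R2_trans.
  rewrite sorted_map (@eq_sorted _ _ R2) ?so /=; last by move=> x y; rewrite /R2 /=; lia.
  rewrite andbT; apply/allrelP => x y /mapP[z zS ->]; rewrite inE => /eqP ->.
  have := allP pos z (mem_subseq sS zS); rewrite /R2; lia.
Qed.

Lemma geq_trans' : transitive geq.
Proof. move=> y x z /= h1 h2; exact: leq_trans h2 h1. Qed.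

Lemma sorted_geqE s : sorted geq s = pairwise geq s.
Proof. exact: (sorted_pairwise geq_trans'). Qed.

Lemma pairwise_nseq n x : pairwise geq (nseq n x).
Proof. by elim: n => //= n ->; rewrite andbT all_nseq /= leqnn orbT. Qed.

Lemma filter_none (a : pred nat) s : (forall x, x \in s -> ~~ a x) -> filter a s = [::].
Proof.
move=> h; rewrite (eq_in_filter (a2 := pred0)) ?filter_pred0 // => x /h; by case: (a x).
Qed.

Lemma split_thr v s : pairwise geq s ->
  s = filter (fun x => v <= x) s ++ filter (fun x => x < v) s.
Proof.
elim: s => //= x s IH /andP[al ps].
case: (leqP v x) => vx /=; first by rewrite -IH.
rewrite filter_none; last by move=> y ys; have := allP al y ys; rewrite /=; lia.
by congr (_ :: _); apply/esym/all_filterP/allP => y ys; have := allP al y ys; rewrite /=; lia.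
Qed.

Lemma sumn_map f s a b : (forall x, x \in s -> f x + a = x + b) ->
  sumn (map f s) + a * size s = sumn s + b * size s.
Proof.
elim: s => [|x s IH h] /=; first by rewrite !muln0.
have := h x (mem_head _ _); have := IH (fun y ys => h y (mem_behead (s := x :: s) ys));
set k := size s; lia.
Qed.

Lemma durfee_split top bot : all (fun x => size top <= x) top ->
  all (fun x => x <= size top) bot -> durfee (top ++ bot) = size top.
Proof.
move=> ht hb; apply/eqP; rewrite eqn_leq; apply/andP; split.
- apply/bigmax_leqP_seq => s _ hs; rewrite leqNgt; apply/negP => lt.
  move: hs; rewrite count_cat.
  have -> : count (fun x => s <= x) bot = 0.
    apply/eqP; rewrite -leqn0 leqNgt -has_count; apply/hasP => -[x xb].
    by have := allP hb x xb; lia.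
  have := count_size (fun x => s <= x) top; lia.
- apply: (leq_bigmax_seq (size top)) => //.
    rewrite mem_index_iota size_cat; lia.
  rewrite count_cat (eq_in_count (a2 := predT)) ?count_predT ?leq_addr //.
  by move=> x xt; rewrite (allP ht x xt).
Qed.

Lemma bigmax_att (I : eqType) (r : seq I) (P : pred I) (F : I -> nat) i0 :
  i0 \in r -> P i0 -> exists2 i, i \in r & P i && (F i == \max_(j <- r | P j) F j).
Proof.
elim: r i0 => // h t IH i0; rewrite inE big_cons => /orP[/eqP<-|i0t] Pi.
- rewrite Pi; have [ht|] := boolP (has (fun j => P j) t).
    have [j jt Pj] := hasP ht; have [i it /andP[Pi2 /eqP e]] := IH j jt Pj.
    case: (leqP (F i0) (F i)) => c.
      by exists i; [rewrite inE it orbT | rewrite Pi2 -e (maxn_idPr c) eqxx].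
    by exists i0; rewrite ?inE ?eqxx // Pi -e (maxn_idPl (ltnW c)) eqxx.
  move=> nh; exists i0; rewrite ?inE ?eqxx // Pi big_hasC //.
  by rewrite maxn0 eqxx.
- have [i it' /andP[Pi2 /eqP e]] := IH _ i0t Pi.
  case: ifP => Ph; last by exists i; rewrite ?inE ?it' ?orbT // Pi2 -e eqxx.
  case: (leqP (F h) (F i)) => c.
    by exists i; rewrite ?inE ?it' ?orbT // Pi2 -e (maxn_idPr c) eqxx.
  by exists h; rewrite ?inE ?eqxx // Ph -e (maxn_idPl (ltnW c)) eqxx.
Qed.

Lemma durfee_props la : pairwise geq la ->
  [/\ durfee la <= size la, all (fun x => durfee la <= x) (take (durfee la) la)
    & all (fun x => x <= durfee la) (drop (durfee la) la)].
Proof.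
move=> pw.
have i0 : 0 \in index_iota 0 (size la).+1 by rewrite mem_index_iota.
have [m mI /andP[Pm /eqP e]] := @bigmax_att _ _ (fun s => s <= count (fun x => s <= x) la) id _ i0 (leq0n _).
rewrite /durfee -e; move: mI; rewrite mem_index_iota => /andP[_ msz].
have mx : count (fun x => m.+1 <= x) la <= m.
  case: (ltnP m (size la)) => ms.
    rewrite leqNgt; apply/negP => h.
    have : m.+1 <= m.
      rewrite [X in _ <= X]e; apply: (leq_bigmax_seq m.+1 (F := id)) => //.
      rewrite mem_index_iota; lia.
    by rewrite ltnn.
  by have := count_size (fun x => m.+1 <= x) la; lia.
split; first lia.
- rewrite (split_thr m pw) take_cat size_filter; case: ifP => _.
    by apply/allP => x /mem_take; rewrite mem_filter => /andP[].
  rewrite (_ : m - _ = 0) ?take0 ?cats0; last by apply/eqP; rewrite subn_eq0.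
  by apply/allP => x; rewrite mem_filter => /andP[].
- rewrite (split_thr m.+1 pw) drop_cat size_filter; case: ifP => h.
    by move: h mx; set k := count _ _; lia.
  by apply/allP => x /mem_drop; rewrite mem_filter => /andP[]; lia.
Qed.

Lemma durfee_pos la : all (fun x => 0 < x) la -> la != [::] -> 0 < durfee la.
Proof.
case: la => // x s /andP[x0 _] _.
rewrite /durfee; apply: (@leq_bigmax_seq _ _ (fun s0 => s0 <= count (fun y => s0 <= y) (x :: s)) id 1).
  by rewrite mem_index_iota.
by rewrite /= x0.
Qed.

Lemma form_exists la : pairwise geq la -> all (fun x => 0 < x) la -> la != [::] ->
  exists m' top t bot2 c, [/\ durfee la = m'.+1,
    la = top ++ (m'.+1 + t) :: bot2 ++ nseq c 1, size top = m',
    all (fun x => m'.+1 + t <= x) top && pairwise geq top &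
    all (fun x => 2 <= x <= m'.+1) bot2 && pairwise geq bot2].
Proof.
move=> pw pos ne; have d0 := durfee_pos pos ne.
have [] := durfee_props pw.
case E: (durfee la) d0 => [|m'] // _ dsz dt db.
set xm := nth 0 la m'.
set bot := drop m'.+1 la.
have ela : la = take m' la ++ xm :: bot by rewrite -drop_nth ?cat_take_drop.
have tk : take m'.+1 la = rcons (take m' la) xm by rewrite (take_nth 0).
have xmge : m'.+1 <= xm by move: dt; rewrite tk => /allP; apply; rewrite mem_rcons mem_head.
have := pw; rewrite ela pairwise_cat /= => /and3P[ar pt /andP[axm pb]].
have topge : all (fun x => xm <= x) (take m' la).
  by apply/allP => x xt; move/allrelP: ar => /(_ x xm xt (mem_head _ _)).
have posb : all (fun x => 0 < x) bot.
  by apply/allP => x xb; apply: (allP pos); rewrite ela mem_cat inE xb !orbT.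
set c := count (pred1 1) bot.
set bot2 := filter (fun x => 2 <= x) bot.
have eb : bot = bot2 ++ nseq c 1.
  rewrite {1}(split_thr 2 pb); congr (_ ++ _).
  have h : all (pred1 1) (filter (fun x => x < 2) bot).
    by apply/allP => x; rewrite mem_filter => /andP[x2 xb]; have := allP posb x xb; rewrite /=; lia.
  rewrite (all_pred1P _ _ h) size_filter /c; congr nseq.
  by apply: eq_in_count => x xb; have := allP posb x xb; rewrite /=; lia.
exists m', (take m' la), (xm - m'.+1), bot2, c; split => //.
- by rewrite (subnKC xmge) -eb.
- by rewrite size_take; case: ltnP => //; lia.
- by rewrite subnKC // topge pt.
- rewrite pairwise_filter // andbT.
  apply/allP => x; rewrite mem_filter => /andP[x2 xb]; rewrite x2 /=.
  by apply: (allP db).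
Qed.

Definition gpart (nu : seq nat) : seq nat := map (subn^~ 2) (filter (fun x => 3 <= x) nu).
Definition Lst (st : seq nat -> nat) (nu : seq nat) : nat :=
  if 1 \in nu then (st (gpart nu)).+1 else st (map predn nu).

Definition psi (mu : seq nat) : seq nat :=
  match durfee mu with
  | 0 => mu
  | m'.+1 =>
    let bot := drop m'.+1 mu in
    let t := nth 0 mu m' - m'.+1 in
    let c := count (pred1 1) bot in
    let bot2 := filter (fun x => 2 <= x) bot in
    if c < t then map (subn^~ c) (take m'.+1 mu) ++ nseq c m'.+2 ++ bot2
    else map (fun x => x + 1 - t) (take m' mu) ++ nseq t m'.+2 ++ bot2 ++ nseq (c - t).+1 1
  end.

Definition phi (nu : seq nat) : seq nat :=
  if 1 \in nu then
    let m' := durfee (gpart nu) in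
    let dr := drop m' nu in
    let t := count (pred1 m'.+2) dr in
    let a := count (pred1 1) nu in
    map (fun x => x + t - 1) (take m' nu) ++ (m'.+1 + t) ::
      filter (fun x => (2 <= x) && (x <= m'.+1)) dr ++ nseq (a.-1 + t) 1
  else
    let m := durfee (map predn nu) in
    let dr := drop m nu in
    let c := count (pred1 m.+1) dr in
    map (addn c) (take m nu) ++ filter (fun x => x <= m) dr ++ nseq c 1.

Lemma durfee_nil : durfee [::] = 0.
Proof. by rewrite /durfee /index_iota /= big_cons big_nil. Qed.

Lemma mono_pairwise f s : (forall x y, y <= x -> f y <= f x) ->
  pairwise geq s -> pairwise geq (map f s).
Proof.
move=> mf; elim: s => //= x s IH /andP[al ps]; rewrite IH // andbT.
by rewrite all_map; apply/allP => y ys /=; apply: mf; apply: (allP al).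
Qed.

Lemma pairwise_geq_cat A B lo : pairwise geq A -> pairwise geq B ->
  all (fun x => lo <= x) A -> all (fun y => y <= lo) B -> pairwise geq (A ++ B).
Proof.
move=> pA pB hA hB; rewrite pairwise_cat; apply/and3P; split => //.
apply/allrelP => x y xA yB /=; exact: leq_trans (allP hB y yB) (allP hA x xA).
Qed.

Lemma all_le_nseq n x lo : x <= lo -> all (fun y => y <= lo) (nseq n x).
Proof. by move=> h; rewrite all_nseq h orbT. Qed.

Lemma all_ge_nseq n x lo : lo <= x -> all (fun y => lo <= y) (nseq n x).
Proof. by move=> h; rewrite all_nseq h orbT. Qed.

Section Form.
Variables (m' t c : nat) (top bot2 : seq nat).
Hypothesis sz : size top = m'.
Hypothesis htop : all (fun x => m'.+1 + t <= x) top.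
Hypothesis ptop : pairwise geq top.
Hypothesis hbot : all (fun x => 2 <= x <= m'.+1) bot2.
Hypothesis pbot : pairwise geq bot2.

Let la := top ++ (m'.+1 + t) :: bot2 ++ nseq c 1.

Lemma form_durfee : durfee la = m'.+1.
Proof.
rewrite /la -cat_rcons durfee_split size_rcons sz //.
  rewrite all_rcons leq_addr /=; apply/allP => x xt; have := allP htop x xt; lia.
rewrite all_cat all_le_nseq // andbT.
by apply/allP => x xb; have := allP hbot x xb; lia.
Qed.

Lemma psi_form : psi la = if c < t
    then map (subn^~ c) (rcons top (m'.+1 + t)) ++ nseq c m'.+2 ++ bot2
    else map (fun x => x + 1 - t) top ++ nseq t m'.+2 ++ bot2 ++ nseq (c - t).+1 1.
Proof.
rewrite /psi form_durfee.
have -> : drop m'.+1 la = bot2 ++ nseq c 1 by rewrite /la -cat_rcons drop_size_cat // size_rcons sz.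
have -> : nth 0 la m' - m'.+1 = t by rewrite /la nth_cat sz ltnn subnn /= addKn.
have -> : count (pred1 1) (bot2 ++ nseq c 1) = c.
  rewrite count_cat count_nseq /= mul1n (eq_in_count (a2 := pred0)) ?count_pred0 //.
  by move=> x xb /=; have := allP hbot x xb; lia.
have -> : filter (fun x => 2 <= x) (bot2 ++ nseq c 1) = bot2.
  rewrite filter_cat filter_nseq /= ?mul0n ?cats0; apply/all_filterP/allP => x xb.
  by have := allP hbot x xb; lia.
by rewrite /la -cat_rcons take_size_cat ?size_rcons ?sz // cat_rcons take_size_cat.
Qed.


Lemma htopr : all (fun x => m'.+1 + t <= x) (rcons top (m'.+1 + t)).
Proof. by rewrite all_rcons leqnn htop. Qed.

Lemma ptopr : pairwise geq (rcons top (m'.+1 + t)).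
Proof.
rewrite -cats1; apply: (pairwise_geq_cat (lo := m'.+1 + t)) => //.
by rewrite /= leqnn.
Qed.

Lemma sumn_la : sumn la = sumn top + (m'.+1 + t) + sumn bot2 + c.
Proof. rewrite /la sumn_cat /= sumn_cat sumn_nseq; lia. Qed.

Lemma size_la : size la = m' + 1 + size bot2 + c.
Proof. rewrite /la size_cat /= size_cat size_nseq sz; lia. Qed.

Section CaseA.
Hypothesis ct : c < t.
Let nu := map (subn^~ c) (rcons top (m'.+1 + t)) ++ nseq c m'.+2 ++ bot2.

Lemma A_ge : all (fun x => m'.+2 <= x) (map (subn^~ c) (rcons top (m'.+1 + t))).
Proof. rewrite all_map; apply/allP => x xt /=; have := allP htopr x xt; rewrite /=; lia. Qed.

Lemma A_props : [/\ pairwise geq nu, all (fun x => 0 < x) nu, sumn nu = sumn la,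
   size nu = size la & (Lst durfee nu = m'.+1 /\ phi nu = la)].
Proof.
have ge2 : all (fun x => 2 <= x) nu.
  rewrite /nu !all_cat all_nseq /= orbT /=; apply/andP; split.
    by apply/allP => x xt; have := allP A_ge x xt; lia.
  by apply/allP => x xt; have := allP hbot x xt; lia.
have n1 : 1 \notin nu by apply/negP => /(allP ge2).
have dA : durfee (map predn nu) = m'.+1.
  rewrite /nu map_cat durfee_split size_map size_map size_rcons sz //.
    rewrite all_map; apply/allP => x xt /=; have := allP A_ge x xt; lia.
  rewrite map_cat map_nseq all_cat all_le_nseq //= all_map.
  by apply/allP => x xt /=; have := allP hbot x xt; lia.
split.
- apply: (pairwise_geq_cat (lo := m'.+2)).
  + apply: mono_pairwise ptopr => x y; lia.
  + apply: (pairwise_geq_cat (lo := m'.+2)) => //; first exact: pairwise_nseq.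
      by rewrite all_ge_nseq.
    by apply/allP => x xt; have := allP hbot x xt; lia.
  + exact: A_ge.
  + rewrite all_cat all_le_nseq //=.
    by apply/allP => x xt; have := allP hbot x xt; lia.
- by apply/allP => x /(allP ge2); lia.
- rewrite sumn_la /nu !sumn_cat sumn_nseq.
  have hs := @sumn_map (subn^~ c) (rcons top (m'.+1 + t)) c 0.
  have {}hs := hs (fun x xt => ltac:(have := allP htopr x xt; rewrite /=; lia)).
  rewrite size_rcons sz sumn_rcons in hs.
  move: hs; set S := sumn (map _ _); set T := sumn top; nia.
- rewrite size_la /nu !size_cat size_map size_rcons size_nseq sz; lia.
split; first by rewrite /Lst (negbTE n1) dA.
rewrite /phi (negbTE n1) dA.
have hsz : size (map (subn^~ c) (rcons top (m'.+1 + t))) = m'.+1 by rewrite size_map size_rcons sz.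
rewrite /nu drop_size_cat // take_size_cat //.
rewrite count_cat count_nseq /= eqxx mul1n (eq_in_count (a2 := pred0)) ?count_pred0 ?addn0; last first.
  by move=> x xb /=; have := allP hbot x xb; lia.
rewrite filter_cat filter_nseq /= ltnn mul0n /=.
have -> : filter (fun x => x <= m'.+1) bot2 = bot2.
  by apply/all_filterP/allP => x xb; have := allP hbot x xb; lia.
rewrite -map_comp map_id_in; last first.
  by move=> x xt /=; have := allP htopr x xt; rewrite /=; lia.
by rewrite /la cat_rcons.
Qed.

End CaseA.

Section CaseB.
Hypothesis tc : t <= c.
Let f := fun x => x + 1 - t.
Let nu := map f top ++ nseq t m'.+2 ++ bot2 ++ nseq (c - t).+1 1.

Lemma B_ge : all (fun x => m'.+2 <= x) (map f top).
Proof. rewrite all_map; apply/allP => x xt /=; have := allP htop x xt; rewrite /f /=; lia. Qed.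

Lemma B_ge3 : all (fun x => 3 <= x) (map f top).
Proof.
apply/allP => x xt; have := allP B_ge x xt.
have : 0 < m' by rewrite -sz -(size_map f); case: (map f top) xt.
lia.
Qed.

Lemma B_gpart : gpart nu = map (subn^~ 2) (map f top) ++
   map (subn^~ 2) (filter (fun x => 3 <= x) (nseq t m'.+2 ++ bot2 ++ nseq (c - t).+1 1)).
Proof. by rewrite /gpart /nu filter_cat map_cat (all_filterP B_ge3). Qed.

Lemma B_props : [/\ pairwise geq nu, all (fun x => 0 < x) nu, sumn nu = sumn la,
   size nu = size la & (Lst durfee nu = m'.+1 /\ phi nu = la)].
Proof.
have i1 : 1 \in nu by rewrite /nu !mem_cat !mem_nseq eqxx !orbT.
have dB : durfee (gpart nu) = m'.
  rewrite B_gpart durfee_split !size_map sz //.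
    rewrite all_map; apply/allP => x xt /=; have := allP B_ge x xt; lia.
  rewrite all_map; apply/allP => x; rewrite mem_filter !mem_cat => /andP[x3 /orP[|/orP[]]].
  - by move/nseqP => [-> _] /=; lia.
  - by move=> xb /=; have := allP hbot x xb; lia.
  - by move/nseqP => [-> _] /=; lia.
have hsz : size (map f top) = m' by rewrite size_map sz.
split.
- apply: (pairwise_geq_cat (lo := m'.+2)).
  + by apply: mono_pairwise ptop => x y; rewrite /f; lia.
  + apply: (pairwise_geq_cat (lo := m'.+2)); first exact: pairwise_nseq.
    * apply: (pairwise_geq_cat (lo := 1)) => //; first exact: pairwise_nseq.
        by apply/allP => x xt; have := allP hbot x xt; lia.
      by rewrite all_le_nseq.
    * by rewrite all_ge_nseq.
    * rewrite all_cat all_le_nseq // andbT.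
      by apply/allP => x xt; have := allP hbot x xt; lia.
  + exact: B_ge.
    rewrite !all_cat all_le_nseq // all_le_nseq // andbT /=.
    by apply/allP => x xt; have := allP hbot x xt; lia.
- rewrite /nu !all_cat all_nseq all_nseq /= !orbT !andbT; apply/andP; split.
    by apply/allP => x xt; have := allP B_ge x xt; lia.
  by apply/allP => x xt; have := allP hbot x xt; lia.
- rewrite sumn_la /nu !sumn_cat !sumn_nseq.
  have hs := @sumn_map f top t 1.
  have {}hs := hs (fun x xt => ltac:(have := allP htop x xt; rewrite /f /=; lia)).
  rewrite sz in hs; move: hs; set S := sumn (map _ _); set T := sumn top; nia.
- rewrite size_la /nu !size_cat size_map !size_nseq sz; lia.
split; first by rewrite /Lst i1 dB.
rewrite /phi i1 dB.
rewrite /nu drop_size_cat // take_size_cat //.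
have -> : count (pred1 m'.+2) (nseq t m'.+2 ++ bot2 ++ nseq (c - t).+1 1) = t.
  rewrite !count_cat !count_nseq /= eqxx mul1n (eq_in_count (a2 := pred0)) ?count_pred0; last first.
    by move=> x xb /=; have := allP hbot x xb; lia.
  by rewrite mul0n !addn0.
have -> : count (pred1 1) (map f top ++ nseq t m'.+2 ++ bot2 ++ nseq (c - t).+1 1) = (c - t).+1.
  rewrite !count_cat !count_nseq /= mul0n mul1n add0n.
  rewrite (eq_in_count (a1 := pred1 1) (a2 := pred0) (s := map f top)) ?count_pred0; last first.
    by move=> x xb /=; have := allP B_ge x xb; lia.
  rewrite (eq_in_count (a1 := pred1 1) (a2 := pred0) (s := bot2)) ?count_pred0; last first.
    by move=> x xb /=; have := allP hbot x xb; lia.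
  by [].
rewrite !filter_cat !filter_nseq /= ltnn mul0n /=.
have -> : filter (fun x => (2 <= x) && (x <= m'.+1)) bot2 = bot2 by apply/all_filterP.
rewrite cats0 -map_comp map_id_in; last first.
  by move=> x xt /=; have := allP htop x xt; rewrite /f /=; lia.
by rewrite /la subnK.
Qed.

End CaseB.

End Form.

Lemma psi_props la : pairwise geq la -> all (fun x => 0 < x) la ->
  [/\ pairwise geq (psi la), all (fun x => 0 < x) (psi la), sumn (psi la) = sumn la,
      size (psi la) = size la & (Lst durfee (psi la) = durfee la /\ phi (psi la) = la)].
Proof.
move=> pw pos; have [->|ne] := eqVneq la [::].
  by rewrite /psi durfee_nil /Lst /phi /= durfee_nil.
have [m' [top [t [bot2 [c [hd ela sz /andP[ht pt] /andP[hb pb]]]]]]] := form_exists pw pos ne.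
rewrite hd ela psi_form //; case: ifP => ct.
  exact: (A_props sz ht pt hb pb ct).
apply: (B_props sz ht pt hb pb); lia.
Qed.

Definition Cnt (st : seq nat -> nat) n l k :=
  count (fun la => (size la == l) && (st la == k)) (partitions n).
Definition Knt (st : seq nat -> nat) n l k :=
  count (fun la => (size la == l) && (Lst st la == k)) (partitions n).

Lemma part_props n la : la \in partitions n ->
  [/\ pairwise geq la, all (fun x => 0 < x) la & sumn la = n].
Proof. by rewrite mem_partitions => /and3P[so pos /eqP sn]; rewrite -sorted_geqE. Qed.

Lemma in_part n la : pairwise geq la -> all (fun x => 0 < x) la -> sumn la = n ->
  la \in partitions n.
Proof. by move=> pw pos sn; rewrite mem_partitions /is_partition sorted_geqE pw pos sn eqxx. Qed.

Lemma Cnt_small st n l k : n < l -> Cnt st n l k = 0.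
Proof.
move=> nl; rewrite /Cnt -(count_pred0 (partitions n)); apply: eq_in_count => la.
move/part_props => [_ pos sn]; have := sumn_ge_size pos; rewrite sn.
by case: eqP => // ->; lia.
Qed.

Lemma decomp12 la : pairwise geq la -> all (fun x => 0 < x) la ->
  la = map (addn 2) (gpart la) ++ nseq (count (pred1 2) la) 2 ++ nseq (count (pred1 1) la) 1.
Proof.
move=> pw pos.
rewrite {1}(split_thr 3 pw); congr (_ ++ _).
  rewrite /gpart -map_comp map_id_in // => x; rewrite mem_filter /= => /andP[x3 _]; lia.
have pw3 : pairwise geq (filter (fun x => x < 3) la) by apply: pairwise_filter.
rewrite {1}(split_thr 2 pw3); congr (_ ++ _).
  have h : all (pred1 2) (filter (fun x => 2 <= x) (filter (fun x => x < 3) la)).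
    by apply/allP => x; rewrite !mem_filter /= => /and3P[]; lia.
  rewrite (all_pred1P _ _ h) size_filter count_filter; congr nseq.
  by apply: eq_count => x /=; lia.
have h : all (pred1 1) (filter (fun x => x < 2) (filter (fun x => x < 3) la)).
  by apply/allP => x; rewrite !mem_filter /= => /and3P[x2 x3 xl]; have := allP pos x xl; lia.
rewrite (all_pred1P _ _ h) size_filter count_filter; congr nseq.
by apply: eq_in_count => x xl /=; have := allP pos x xl; lia.
Qed.

Definition key12 (la : seq nat) : option (nat * nat) :=
  if 1 \in la then Some (count (pred1 1) la, count (pred1 2) la) else None.
Definition np n l a b := n - a - 2 * b - 2 * (l - a - b).
Definition kap n l a b := [&& 0 < a, a + b <= l & np n l a b + 2 * (l - a - b) + 2 * b + a == n].
Definition gg a b (rho : seq nat) := map (addn 2) rho ++ nseq b 2 ++ nseq a 1.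

Lemma gpart_gg rho a b : all (fun x => 0 < x) rho -> gpart (gg a b rho) = rho.
Proof.
move=> pos; rewrite /gpart /gg !filter_cat !filter_nseq /= ?mul0n /= ?cats0.
rewrite (all_filterP _); last by rewrite all_map; apply/allP => x /(allP pos) /=; lia.
by rewrite -map_comp map_id_in // => x _ /=; lia.
Qed.

Lemma gpart_part la : pairwise geq la -> pairwise geq (gpart la) /\ all (fun x => 0 < x) (gpart la).
Proof.
move=> pw; split.
  by apply: mono_pairwise; [move=> x y; lia | exact: pairwise_filter].
by rewrite all_map; apply/allP => x; rewrite mem_filter /= => /andP[]; lia.
Qed.

Lemma fiber_some st n l k a b :
  count (fun la => ((size la == l) && (Lst st la == k)) && (key12 la == Some (a, b))) (partitions n) =
  count (fun rho => [&& kap n l a b, size rho == l - a - b & (st rho).+1 == k]) (partitions (np n l a b)).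
Proof.
apply: (count_bij (f := gpart) (g := gg a b)); rewrite ?uniq_partitions //.
- move=> la /part_props [pw pos sn]; rewrite /key12 /Lst.
  case: ifP => i1; last by case/andP.
  move=> /andP[/andP[/eqP sl /eqP sk] /eqP [ea eb]].
  have [pg posg] := gpart_part pw.
  have e := decomp12 pw pos; rewrite ea eb in e.
  have a0 : 0 < a by rewrite -ea -has_count; apply/hasP; exists 1.
  have hs : size la = size (gpart la) + b + a by rewrite {1}e /= !size_cat size_map !size_nseq addnA.
  have hn : sumn la = sumn (gpart la) + 2 * size (gpart la) + 2 * b + a.
    rewrite {1}e !sumn_cat !sumn_nseq.
    have := @sumn_map (addn 2) (gpart la) 0 2 (fun x _ => ltac:(lia)).
    set S := sumn (map _ _); set u := size (gpart la); set v := sumn (gpart la); lia.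
  rewrite sl in hs; rewrite sn in hn.
  move: hs hn; set u := size (gpart la); set v := sumn (gpart la) => hs hn.
  have sg : v = np n l a b by rewrite /np; lia.
  rewrite (in_part pg posg sg) /= /kap a0 /= sk eqxx andbT.
  rewrite /np; apply/andP; split; [apply/andP; split|]; apply/eqP || idtac; lia.
- move=> rho /part_props [pw pos sn] /and3P[/and3P[a0 abl /eqP kn] /eqP sr /eqP sk].
  have pw' : pairwise geq (gg a b rho).
    apply: (pairwise_geq_cat (lo := 2)).
    + by apply: mono_pairwise pw => x y; lia.
    + apply: (pairwise_geq_cat (lo := 1)); rewrite ?all_ge_nseq ?all_le_nseq //; exact: pairwise_nseq.
    + by rewrite all_map; apply/allP => x /(allP pos) /=; lia.
    + by rewrite all_cat !all_le_nseq.
  have pos' : all (fun x => 0 < x) (gg a b rho).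
    by rewrite /gg !all_cat all_map !all_nseq /= !orbT !andbT; apply/allP => x /(allP pos) /=; lia.
  have sn' : sumn (gg a b rho) = n.
    rewrite /gg !sumn_cat !sumn_nseq.
    have := @sumn_map (addn 2) rho 0 2 (fun x _ => ltac:(lia)).
    move: kn; rewrite sn -sr; set S := sumn (map _ _); set u := size rho; set N := np n l a b; lia.
  rewrite (in_part pw' pos' sn') /=.
  have i1 : 1 \in gg a b rho by rewrite /gg !mem_cat !mem_nseq a0 eqxx !orbT.
  rewrite /key12 /Lst i1 gpart_gg // sk eqxx andbT.
  have c1 : count (pred1 1) (map (addn 2) rho) = 0.
    by rewrite count_map (eq_in_count (a2 := pred0)) ?count_pred0 // => x /(allP pos) /=; lia.
  have c2 : count (pred1 2) (map (addn 2) rho) = 0.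
    by rewrite count_map (eq_in_count (a2 := pred0)) ?count_pred0 // => x /(allP pos) /=; lia.
  rewrite /gg !size_cat size_map !size_nseq !count_cat !count_nseq c1 c2 /= !mul1n !mul0n !addn0.
  apply/andP; split; apply/eqP; first by rewrite sr; lia.
  done.
- move=> la /part_props [pw pos sn]; rewrite /key12; case: ifP => i1; last by case/andP.
  move=> /andP[_ /eqP [<- <-]]; exact/esym/decomp12.
- by move=> rho /part_props [pw pos sn] _; apply: gpart_gg.
Qed.

Lemma fiber_none st n l k : 0 < l ->
  count (fun la => ((size la == l) && (Lst st la == k)) && (key12 la == None)) (partitions n) =
  Cnt st (n - l) l k.
Proof.
move=> l0; apply: (count_bij (f := map predn) (g := map succn)); rewrite ?uniq_partitions //.
- move=> la /part_props [pw pos sn]; rewrite /key12 /Lst.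
  case: ifP => i1; first by case/andP.
  move=> /andP[/andP[/eqP sl /eqP sk] _].
  have ge2 : all (fun x => 2 <= x) la.
    apply/allP => x xl; have := allP pos x xl; case: (x =P 1) => [e|]; last lia.
    by move: i1; rewrite -e xl.
  apply/andP; split; last by rewrite size_map sl sk !eqxx.
  apply: in_part.
  - by apply: mono_pairwise pw => x y; lia.
  - by rewrite all_map; apply/allP => x /(allP ge2) /=; lia.
  - have := @sumn_map predn la 1 0 (fun x xl => ltac:(have := allP ge2 x xl; rewrite /=; lia)).
    rewrite sl sn; set S := sumn _; lia.
- move=> rho /part_props [pw pos sn] /andP[/eqP sr /eqP sk].
  have nl : l <= n - l by rewrite -sn -sr; apply: sumn_ge_size.
  have sn' : sumn (map succn rho) = n.
    have := @sumn_map succn rho 0 1 (fun x _ => ltac:(lia)).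
    rewrite sr sn; set S := sumn _; lia.
  have n1 : 1 \in map succn rho = false.
    by apply/negbTE/negP => /mapP [x /(allP pos) /=]; lia.
  rewrite in_part //; last by rewrite all_map; apply/allP => x /(allP pos) /=; lia.
    by rewrite /key12 /Lst n1 size_map sr -map_comp map_id sk !eqxx.
  by apply: mono_pairwise pw => x y; lia.
- move=> la /part_props [pw pos sn]; rewrite /key12; case: ifP => i1; first by case/andP.
  move=> _; rewrite -map_comp map_id_in // => x xl /=.
  have := allP pos x xl; case: (x =P 1) => [e|]; last lia.
  by move: i1; rewrite -e xl.
- by move=> rho _ _; rewrite -map_comp map_id.
Qed.

Lemma Knt_eq s1 s2 n l k : 0 < l ->
  (forall n' l' k', n' < n -> Cnt s1 n' l' k' = Cnt s2 n' l' k') ->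
  Knt s1 n l k = Knt s2 n l k.
Proof.
move=> l0 IH; apply: (count_fiber_eq (key := key12)) => -[[a b]|].
- rewrite !fiber_some; case kp: (kap n l a b) => //=.
  case: k => [|k].
    by rewrite !(eq_count (a2 := pred0)) // => x; rewrite andbF.
  under eq_count do rewrite eqSS.
  under [RHS]eq_count do rewrite eqSS.
  apply: IH; move: kp; rewrite /kap => /and3P[a0 _ /eqP]; lia.
- rewrite !fiber_none //; case: n IH => [|n] IH.
    by rewrite !Cnt_small.
  by apply: IH; lia.
Qed.

Lemma km_Lst la : pairwise geq la -> all (fun x => 0 < x) la ->
  k_measure 2 la = Lst (k_measure 2) la.
Proof.
move=> pw pos; rewrite /Lst; case: ifP => i1.
  have [pg posg] := gpart_part pw.
  rewrite {1}(decomp12 pw pos) km_plus2 //.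
  by rewrite -has_count; apply/hasP; exists 1.
rewrite -[k_measure 2 (map predn la)]km_succ -map_comp map_id_in // => x xl /=.
have := allP pos x xl; case: (x =P 1) => [e|]; last lia.
by move: i1; rewrite -e xl.
Qed.

Lemma Cnt_meas n l m : Cnt (k_measure 2) n l m = Knt (k_measure 2) n l m.
Proof.
apply: eq_in_count => la /part_props [pw pos _].
by rewrite -km_Lst.
Qed.

Lemma Cnt_durfee n l m : Cnt durfee n l m = Knt durfee n l m.
Proof.
rewrite /Knt (count_perm_map (f := psi)) ?uniq_partitions //.
- apply: eq_in_count => la /part_props [pw pos _].
  by have [_ _ _ -> [-> _]] := psi_props pw pos.
- move=> la /part_props [pw pos sn].
  have [pw' pos' sn' _ _] := psi_props pw pos.
  by apply: in_part; rewrite ?sn'.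
- move=> x y /part_props [pwx posx _] /part_props [pwy posy _] e.
  have [_ _ _ _ [_ ex]] := psi_props pwx posx.
  have [_ _ _ _ [_ ey]] := psi_props pwy posy.
  by rewrite -ex e ey.
Qed.

Lemma main n l m : Cnt (k_measure 2) n l m = Cnt durfee n l m.
Proof.
elim/ltn_ind: n l m => n IH l m.
case: l => [|l].
  apply: eq_in_count => la _; case: la => [|x la] //=.
  by rewrite durfee_nil /k_measure /= big_cons big_nil.
rewrite Cnt_meas Cnt_durfee; apply: Knt_eq => // n' l' k' lt.
exact: IH.
Qed.

Theorem corollary1p5 (n l m : nat) :
  count (fun la => (size la == l) && (k_measure 2 la == m)) (partitions n) =
  count (fun la => (size la == l) && (durfee la == m)) (partitions n).
Proof. exact: main. Qed.
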